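(* Let $\Omega \subset \mathbb{R}^n$ be a bounded domain and $V_h \subseteq H^1(\Omega)$ a finite element space. Let $A: \mathbb{R} \to \mathbb{R}$ be a continuously differentiable function, and for $v \in V_h$ write $A(v)$ for the function $x \mapsto A(v(x))$ and $A'(v)$ for $x \mapsto A'(v(x))$. Define the energy $E(v) = \frac{1}{2}(A(v)\nabla v, \nabla v) = \frac{1}{2}\|\sqrt{A(v)}\nabla v\|^2$ for $v \in V_h$. Let $u_h \in V_h$ be a minimizer of $E$ over $V_h$, in the sense that the Gateaux derivative of $E$ at $u_h$ vanishes in every direction $w \in V_h$, i.e. $(A(u_h)\nabla u_h, \nabla w) + \frac{1}{2}(A'(u_h) w \nabla u_h, \nabla u_h) = 0$ for all $w \in V_h$. Assume that $A(v) \geq \alpha > 0$ (pointwise) for all $v \in V_h$, for a constant $\alpha$, and that $A'(u_h) u_h \geq 0$ pointwise. Then there exists a constant $C > 0$ (depending only on $\alpha$) such that $$\|\nabla u_h - \nabla v\|_{L^2(\Omega)}^2 \leq C\,\big(E(v) - E(u_h)\big) \quad \text{for all } v \in V_h.$$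
   Context: $(\cdot,\cdot)$ and $\|\cdot\|$ denote the $L^2(\Omega)$ inner product and norm. The energy has zero right-hand side ($f=0$). *)

(* Defs.v *)
From HB Require Import structures.
From mathcomp Require Import all_boot all_order all_algebra.
From mathcomp Require Import all_classical all_reals all_analysis.
From mathcomp Require Import matrix_normedtype.
Import Order.TTheory GRing.Theory Num.Theory.
Set Implicit Arguments. Unset Strict Implicit. Unset Printing Implicit Defensive.
Import numFieldNormedType.Exports.
Local Open Scope classical_set_scope.
Local Open Scope ring_scope.

Section Defs.
Variables (R : realType) (n : nat).

Definition Rn : Type := g_sigma_algebraType (open : set (set 'rV[R]_n)).

Definition box (a b : 'rV[R]_n) : set 'rV[R]_n :=
  [set x | forall i, a 0 i <= x 0 i <= b 0 i].

(* mu is the (Borel) Lebesgue measure on R^n: it gives every box its volume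
   (this determines the measure uniquely on Borel sets). *)
Definition is_lebesgue (mu : {measure set Rn -> \bar R}) : Prop :=
  forall a b : 'rV[R]_n, (forall i, a 0 i <= b 0 i) ->
    mu (box a b) = (\prod_(i < n) (b 0 i - a 0 i))%:E.

Definition dotv (a b : 'rV[R]_n) : R := \sum_(i < n) a 0 i * b 0 i.

Fixpoint iterD (ds : seq 'rV[R]_n) (f : 'rV[R]_n -> R) : 'rV[R]_n -> R :=
  if ds is d :: ds' then (fun x => 'D_d (iterD ds' f) x) else f.

Definition smooth (f : 'rV[R]_n -> R) : Prop :=
  forall ds x, differentiable (iterD ds f) x.

Definition test_fun (Omega : set 'rV[R]_n) (phi : 'rV[R]_n -> R) : Prop :=
  smooth phi /\ compact (closure [set x | phi x != 0]) /\
  closure [set x | phi x != 0] `<=` Omega.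

Variable mu : {measure set Rn -> \bar R}.

Definition L2 (Omega : set 'rV[R]_n) (f : 'rV[R]_n -> R) : Prop :=
  measurable_fun (Omega : set Rn) (f : Rn -> R) /\
  mu.-integrable (Omega : set Rn) (fun x : Rn => ((f x) ^+ 2)%:E).

Definition weak_grad (Omega : set 'rV[R]_n) (v : 'rV[R]_n -> R)
    (g : 'rV[R]_n -> 'rV[R]_n) : Prop :=
  forall phi, test_fun Omega phi -> forall i : 'I_n,
    Rintegral mu (Omega : set Rn) (fun x : Rn => v x * 'D_(delta_mx 0 i) phi x)
    = - Rintegral mu (Omega : set Rn) (fun x : Rn => g x 0 i * phi x).

Definition H1_with_grad (Omega : set 'rV[R]_n) (v : 'rV[R]_n -> R)
    (g : 'rV[R]_n -> 'rV[R]_n) : Prop :=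
  L2 Omega v /\ (forall i : 'I_n, L2 Omega (fun x => g x 0 i)) /\
  weak_grad Omega v g.

Definition fin_dim_subspace (Vh : set ('rV[R]_n -> R)) : Prop :=
  Vh (fun _ => 0) /\
  (forall (a : R) v w, Vh v -> Vh w -> Vh (fun x => a * v x + w x)) /\
  exists (m : nat) (b : 'I_m -> 'rV[R]_n -> R),
    (forall j, Vh (b j)) /\
    forall v, Vh v -> exists c : 'I_m -> R,
      forall x, v x = \sum_(j < m) c j * b j x.

Definition L2int (Omega : set 'rV[R]_n) (f : 'rV[R]_n -> R) : R :=
  Rintegral mu (Omega : set Rn) (f : Rn -> R).

Definition energy (Omega : set 'rV[R]_n) (A : R -> R)
    (grad : ('rV[R]_n -> R) -> 'rV[R]_n -> 'rV[R]_n) (v : 'rV[R]_n -> R) : R :=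
  2^-1 * L2int Omega (fun x => A (v x) * dotv (grad v x) (grad v x)).

End Defs.

(* Main.v *)
Require Import Defs.
From HB Require Import structures.
From mathcomp Require Import all_boot all_order all_algebra.
From mathcomp Require Import all_classical all_reals all_analysis.
From mathcomp Require Import matrix_normedtype.
From mathcomp Require Import ring lra.
Import Order.TTheory GRing.Theory Num.Theory.
Import numFieldNormedType.Exports.
Local Open Scope classical_set_scope.
Local Open Scope ring_scope.

Lemma dot_ge0 (R : realType) n (a : 'rV[R]_n) : 0 <= dotv a a.
Proof. by rewrite /dotv; apply: sumr_ge0 => i _; rewrite -expr2 sqr_ge0. Qed.

Lemma dot_sub_le (R : realType) n (a b : 'rV[R]_n) :
  dotv (a - b) (a - b) <= 2 * dotv a a + 2 * dotv b b.
Proof.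
rewrite /dotv !mulr_sumr -big_split /=; apply: ler_sum => i _.
rewrite !mxE; have := sqr_ge0 (a 0 i + b 0 i); rewrite expr2; nra.
Qed.

Arguments dot_ge0 {R n}. Arguments dot_sub_le {R n}.

Lemma meas_dot (R : realType) n (D : set (Rn R n)) (g h : 'rV[R]_n -> 'rV[R]_n) :
  (forall i, measurable_fun D (fun x : Rn R n => g x 0 i)) ->
  (forall i, measurable_fun D (fun x : Rn R n => h x 0 i)) ->
  measurable_fun D (fun x : Rn R n => dotv (g x - h x) (g x - h x)).
Proof.
move=> mg mh; rewrite /dotv.
apply: measurable_sum => i.
have mi : measurable_fun D (fun x : Rn R n => (g x - h x) 0 i).
  have -> : (fun x : Rn R n => (g x - h x) 0 i) = (g^~ 0 ^~ i) \- (h^~ 0 ^~ i).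
    by apply: funext => x; rewrite !mxE.
  exact: (measurable_realfun.measurable_funB (mg i) (mh i)).
exact: (measurable_realfun.measurable_funM mi mi).
Qed.

Theorem mainTheorem3 (R : realType) (alpha : R) (halpha : 0 < alpha) :
  exists C : R, 0 < C /\
  forall (n : nat) (mu : {measure set Rn R n -> \bar R})
         (Omega : set 'rV[R]_n)
         (Vh : set ('rV[R]_n -> R))
         (grad : ('rV[R]_n -> R) -> 'rV[R]_n -> 'rV[R]_n)
         (A : R -> R) (uh : 'rV[R]_n -> R),
    is_lebesgue mu ->
    open Omega -> connected Omega -> Omega !=set0 -> bounded_set Omega ->
    fin_dim_subspace Vh ->
    (forall v, Vh v -> H1_with_grad mu Omega v (grad v)) ->
    (forall x, derivable A x 1) -> continuous (derive1 A) ->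
    (* well-definedness of the integrals (automatic for finite element spaces) *)
    (forall v w, Vh v -> Vh w ->
       mu.-integrable (Omega : set (Rn R n))
         (fun x : Rn R n => (A (v x) * dotv (grad v x) (grad w x))%:E) /\
       mu.-integrable (Omega : set (Rn R n))
         (fun x : Rn R n => ((derive1 A) (v x) * w x * dotv (grad v x) (grad v x))%:E)) ->
    (forall v, Vh v -> forall x, Omega x -> alpha <= A (v x)) ->
    Vh uh ->
    (forall w, Vh w ->
       L2int mu Omega (fun x => A (uh x) * dotv (grad uh x) (grad w x))
       + 2^-1 * L2int mu Omega
           (fun x => (derive1 A) (uh x) * w x * dotv (grad uh x) (grad uh x)) = 0) ->
    (forall x, Omega x -> 0 <= (derive1 A) (uh x) * uh x) ->
    forall v, Vh v ->
      L2int mu Omega (fun x => dotv (grad uh x - grad v x) (grad uh x - grad v x))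
      <= C * (energy mu Omega A grad v - energy mu Omega A grad uh).
Proof.
exists (4 / alpha); split; first by rewrite divr_gt0.
move=> n mu Omega Vh grad A uh _ oO _ _ _ _ H1 _ _ Hint HA Vu Hcrit Hpos v Vv.
have mO : measurable (Omega : set (Rn R n)) by exact: sub_sigma_algebra.
have [Iu I2] := Hint uh uh Vu Vu.
have [Iv _] := Hint v v Vv Vv.
set I1 := L2int mu Omega (fun x => A (uh x) * dotv (grad uh x) (grad uh x)).
set J := L2int mu Omega (fun x => A (v x) * dotv (grad v x) (grad v x)).
have I1ge0 : 0 <= I1.
  apply: Rintegral_ge0 => x Ox; apply: mulr_ge0; last exact: dot_ge0.
  exact: le_trans (ltW halpha) (HA _ Vu _ Ox).
have Jge0 : 0 <= J.
  apply: Rintegral_ge0 => x Ox; apply: mulr_ge0; last exact: dot_ge0.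
  exact: le_trans (ltW halpha) (HA _ Vv _ Ox).
have I2ge0 : 0 <= L2int mu Omega
    (fun x => (derive1 A) (uh x) * uh x * dotv (grad uh x) (grad uh x)).
  apply: Rintegral_ge0 => x Ox; apply: mulr_ge0; last exact: dot_ge0.
  exact: Hpos.
have I10 : I1 = 0 by have := Hcrit uh Vu; rewrite -/I1; lra.
rewrite /energy -/I1 -/J I10.
have [_ [mgu _]] := H1 _ Vu.
have [_ [mgv _]] := H1 _ Vv.
have md : measurable_fun (Omega : set (Rn R n))
    (fun x : Rn R n => dotv (grad uh x - grad v x) (grad uh x - grad v x)).
  by apply: meas_dot => i; [case: (mgu i) | case: (mgv i)].
set F := fun x : Rn R n => 2 / alpha *
  (A (uh x) * dotv (grad uh x) (grad uh x) + A (v x) * dotv (grad v x) (grad v x)).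
have pw : forall x, Omega x ->
    dotv (grad uh x - grad v x) (grad uh x - grad v x) <= F x.
  move=> x Ox; rewrite /F.
  have hd := dot_sub_le (grad uh x) (grad v x).
  have hu := dot_ge0 (grad uh x); have hv := dot_ge0 (grad v x).
  have hAu := HA _ Vu _ Ox; have hAv := HA _ Vv _ Ox.
  have K0 : 0 <= 2 / alpha by rewrite divr_ge0 // ltW.
  have Ka : 2 / alpha * alpha = 2 by rewrite mulrVK // unitfE gt_eqF.
  have h1 : alpha * dotv (grad uh x) (grad uh x) <= A (uh x) * dotv (grad uh x) (grad uh x)
    by rewrite ler_wpM2r.
  have h2 : alpha * dotv (grad v x) (grad v x) <= A (v x) * dotv (grad v x) (grad v x)
    by rewrite ler_wpM2r.
  apply: (le_trans hd); nra.
have iG : mu.-integrable (Omega : set (Rn R n)) (EFin \o (fun x : Rn R n =>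
    A (uh x) * dotv (grad uh x) (grad uh x) + A (v x) * dotv (grad v x) (grad v x))).
  have -> : (EFin \o (fun x : Rn R n => (A (uh x) * dotv (grad uh x) (grad uh x) + A (v x) * dotv (grad v x) (grad v x))))
    = (fun x : Rn R n => (A (uh x) * dotv (grad uh x) (grad uh x))%:E + (A (v x) * dotv (grad v x) (grad v x))%:E)%E.
    by apply: funext => x; rewrite /= EFinD.
  by apply: integrableD.
have iF : mu.-integrable (Omega : set (Rn R n)) (EFin \o F).
  move: iG; set G := (fun x : Rn R n => _) => iG.
  have -> : EFin \o F = (fun x => (2 / alpha)%:E * (EFin \o G) x)%E.
    by apply: funext => x; rewrite /F /= EFinM.
  exact: integrableZl.
have id : mu.-integrable (Omega : set (Rn R n))
    (EFin \o (fun x : Rn R n => dotv (grad uh x - grad v x) (grad uh x - grad v x))).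
  apply: le_integrable iF => //.
    by apply/measurable_realfun.measurable_EFinP.
  move=> x Ox /=; rewrite lee_fin ger0_norm ?dot_ge0 // ger0_norm; first exact: pw.
  exact: le_trans (dot_ge0 _) (pw x Ox).
apply: (le_trans (le_Rintegral mO id iF pw)).
rewrite /F RintegralZl // RintegralD //.
change (2 / alpha * (I1 + J) <= 4 / alpha * (2^-1 * J - 2^-1 * 0)).
rewrite I10 mulr0 subr0 add0r le_eqVlt; apply/orP; left; apply/eqP.
by field; rewrite gt_eqF.
Qed.
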